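(* For each integer $r\ge2$ there is a constant $C(r)$ such that the following holds. Let $K\ge1$ and $N\le r(K+1)$ be positive integers, let $y:=r-N/(K+1)\ge0$, and let $\iota\ge1$ be an integer. Then the number of sequences $\mathbf j=(j_1,\dots,j_r)$ of distinct elements of $\mathbb Z/N\mathbb Z$ with $M(r+1,\mathbf j)=\iota$ is at most $C(r)\,N\,(yK+\iota)^{r-2}$.
   Context: For a sequence $\mathbf j=(j_1,\dots,j_r)$ of distinct elements of $\mathbb Z/N\mathbb Z\cong\{1,\dots,N\}$ and $1\le s\le r+1$, let $\mathrm{missed}(s,\mathbf j):=\{i\in\{1,\dots,N\}: i-j_t\notin\{0,1,\dots,K\}\ (\mathrm{mod}\ N)\text{ for all }t<s\}$ and $M(s,\mathbf j):=|\mathrm{missed}(s,\mathbf j)|$. *)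

(* Defs.v *)
(* Z/NZ is represented by 'I_N (residues 0..N-1). *)
From mathcomp Require Import all_boot all_order all_algebra.
Set Implicit Arguments. Unset Strict Implicit. Unset Printing Implicit Defensive.

Definition cdiff (N : nat) (i j : 'I_N) : nat := (i + N - j) %% N.

(* missed(s, j) = { i : i - j_t notin {0,...,K} (mod N) for all t < s },
   with j = (j_1,...,j_r) stored 0-based as a tuple (j_t = tnth j (t-1)). *)
Definition missed (N K r s : nat) (j : r.-tuple 'I_N) : {set 'I_N} :=
  [set i : 'I_N | [forall t : 'I_r, (t.+1 < s) ==> (K < cdiff i (tnth j t))]].

Definition M (N K r s : nat) (j : r.-tuple 'I_N) : nat := #|missed K s j|.

(* Main.v *)
Require Import Defs.
From mathcomp Require Import all_boot all_order all_algebra.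
From mathcomp Require Import zify ring lra.
Import Order.TTheory GRing.Theory Num.Theory.
Set Implicit Arguments. Unset Strict Implicit. Unset Printing Implicit Defensive.

Lemma cdiffE N (i c : 'I_N) : cdiff i c = if c <= i then i - c else i + N - c.
Proof.
rewrite /cdiff. have := ltn_ord i. have := ltn_ord c.
move: (nat_of_ord i) (nat_of_ord c) => x z hz hx.
case: ifP => h.
  by rewrite -addnBAC // modnDr modn_small //; lia.
by rewrite modn_small //; lia.
Qed.

Lemma cdiff_lt N (i c : 'I_N) : cdiff i c < N.
Proof. rewrite cdiffE; have := ltn_ord i; have := ltn_ord c; case: ifP; lia. Qed.

Lemma cdiff0 N (i c : 'I_N) : (cdiff i c == 0) = (i == c).
Proof.
rewrite cdiffE; have := ltn_ord i; have := ltn_ord c.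
case: (eqVneq i c) => [->|h]; first by rewrite leqnn subnn.
have h' : (i : nat) != c by apply: contra h => /eqP/ord_inj ->.
move: h'; case: ifP; lia.
Qed.

Lemma cdiff_inj1 N (c : 'I_N) : injective (fun i => cdiff i c).
Proof.
move=> i i'; rewrite /= !cdiffE => E; apply: ord_inj; move: E.
have := ltn_ord i; have := ltn_ord i'; have := ltn_ord c.
do 2 case: ifP; lia.
Qed.

Lemma cdiff_inj2 N (i : 'I_N) : injective (cdiff i).
Proof.
move=> c c'; rewrite !cdiffE => E; apply: ord_inj; move: E.
have := ltn_ord i; have := ltn_ord c'; have := ltn_ord c.
do 2 case: ifP; lia.
Qed.

Lemma cdiff_tri N (a b c : 'I_N) :
  cdiff b a + cdiff a c = cdiff b c \/ cdiff b a + cdiff a c = cdiff b c + N.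
Proof.
rewrite !cdiffE; have := ltn_ord a; have := ltn_ord b; have := ltn_ord c.
do 3 case: ifP; lia.
Qed.


Definition succP N n (j : n.-tuple 'I_N) (t q : 'I_n) : bool :=
  (q != t) && [forall q', (q' != t) ==> (cdiff (tnth j q) (tnth j t) <= cdiff (tnth j q') (tnth j t))].
Definition succ N n (j : n.-tuple 'I_N) t := odflt t [pick q | succP j t q].
Definition gap N n (j : n.-tuple 'I_N) t := cdiff (tnth j (succ j t)) (tnth j t).

Lemma other n (t : 'I_n) : 1 < n -> exists q : 'I_n, q != t.
Proof.
move=> hn; case: (posnP t) => h.
  exists (Ordinal hn); apply/eqP => /(congr1 val) /=; lia.
exists (Ordinal (ltn_trans (ltn0Sn 0) hn)); apply/eqP => /(congr1 val) /=; lia.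
Qed.

Lemma succ_spec N n (j : n.-tuple 'I_N) t : 1 < n ->
  succ j t != t /\ forall q, q != t -> gap j t <= cdiff (tnth j q) (tnth j t).
Proof.
move=> hn; have [q0 hq0] := other t hn.
rewrite /gap /succ; case: pickP => [q /andP[Hq /forallP Hf] | H].
  by split => // q' /= hq'; have := Hf q'; rewrite hq'.
exfalso.
case: (@arg_minnP _ q0 (fun q => q != t) (fun q => cdiff (tnth j q) (tnth j t)) hq0) => q hq hmin.
have := H q; rewrite /succP hq /=; move/negP; apply; apply/forallP => q'.
by apply/implyP; apply: hmin.
Qed.

Lemma gap_pos N n (j : n.-tuple 'I_N) t : 1 < n -> uniq j -> 0 < gap j t.
Proof.
move=> hn /tuple_uniqP hu; have [h _] := succ_spec j t hn.
rewrite lt0n /gap cdiff0; apply: contra h => /eqP /hu ->.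
by [].
Qed.

Definition arc N n (j : n.-tuple 'I_N) t := [set i : 'I_N | cdiff i (tnth j t) < gap j t].

Lemma arc_own N n (j : n.-tuple 'I_N) t i : 1 < n -> uniq j ->
  i \in arc j t -> forall s, cdiff i (tnth j t) <= cdiff i (tnth j s).
Proof.
move=> hn hu; rewrite inE => hi s; rewrite leqNgt; apply/negP => hlt.
have hst : s != t by apply: contraTneq hlt => ->; rewrite ltnn.
have [_ hg] := succ_spec j t hn.
have := hg s hst; have := cdiff_tri (tnth j s) i (tnth j t).
have := cdiff_lt (tnth j s) (tnth j t). lia.
Qed.

Lemma arc_ex N n (j : n.-tuple 'I_N) i : 1 < n -> uniq j -> exists t, i \in arc j t.
Proof.
move=> hn hu.
case: (@arg_minnP _ (Ordinal (ltn_trans (ltn0Sn 0) hn)) predT (fun t => cdiff i (tnth j t)) isT) => t _ hmin.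
exists t; rewrite inE ltnNge; apply/negP => hge.
have [hs hg] := succ_spec j t hn.
have := hmin (succ j t) isT; have := gap_pos t hn hu.
have := cdiff_tri (tnth j (succ j t)) i (tnth j t).
have := cdiff_lt i (tnth j (succ j t)). move: hge; rewrite /gap. lia.
Qed.

Lemma arc_uniq N n (j : n.-tuple 'I_N) i t s : 1 < n -> uniq j ->
  i \in arc j t -> i \in arc j s -> t = s.
Proof.
move=> hn hu ht hs.
have := arc_own hn hu ht s; have := arc_own hn hu hs t => h1 h2.
have /cdiff_inj2 E : cdiff i (tnth j t) = cdiff i (tnth j s) by apply/eqP; rewrite eqn_leq h1 h2.
by move/tuple_uniqP: hu; apply.
Qed.

Lemma card_setP (T : finType) (P : pred T) : #|[set i : T | P i]| = \sum_i (P i : nat).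
Proof. rewrite -sum1_card big_mkcond; apply: eq_bigr => i _; rewrite inE; by case: (P i). Qed.

Lemma card_part N n (j : n.-tuple 'I_N) (S : {set 'I_N}) : 1 < n -> uniq j ->
  #|S| = \sum_t #|S :&: arc j t|.
Proof.
move=> hn hu.
have e1 : forall i, \sum_t ((i \in arc j t) : nat) = 1.
  move=> i; have [t0 ht0] := arc_ex i hn hu.
  rewrite (bigD1 t0) //= ht0 big1 // => t ht.
  case h: (i \in arc j t) => //.
  by move: ht; rewrite (arc_uniq hn hu h ht0) eqxx.
rewrite -sum1_card (eq_bigr (fun i => \sum_t ((i \in arc j t) : nat))); last by move=> i _; rewrite e1.
rewrite exchange_big /=; apply: eq_bigr => t _.
rewrite -[RHS]sum1_card big_mkcond [RHS]big_mkcond /=; apply: eq_bigr => i _.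
by rewrite !inE; case: (i \in S); case: (i \in arc j t).
Qed.

Lemma sum_range n lo hi : \sum_(k < n) ((lo <= k < hi) : nat) = minn hi n - lo.
Proof.
elim: n => [|n IH]; first by rewrite big_ord0; lia.
rewrite big_ord_recr /= IH; case: (lo <= n < hi) /andP => h; lia.
Qed.

Lemma card_range N (c : 'I_N) lo hi : hi <= N ->
  #|[set i : 'I_N | lo <= cdiff i c < hi]| = hi - lo.
Proof.
move=> hhi; rewrite card_setP.
pose h (i : 'I_N) : 'I_N := Ordinal (cdiff_lt i c).
have hinj : injective h by move=> x y /(congr1 val) /= /cdiff_inj1.
rewrite (_ : \sum_(i : 'I_N) ((lo <= cdiff i c < hi) : nat) = \sum_(i : 'I_N) ((lo <= h i < hi) : nat)) //.
rewrite -(reindex_inj (P := predT) (F := fun k : 'I_N => ((lo <= k < hi) : nat)) hinj) sum_range.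
lia.
Qed.

Lemma gap_le N n (j : n.-tuple 'I_N) t : gap j t <= N.
Proof. exact: ltnW (cdiff_lt _ _). Qed.

Lemma sum_gap N n (j : n.-tuple 'I_N) : 1 < n -> uniq j -> \sum_t gap j t = N.
Proof.
move=> hn hu; rewrite -[RHS](card_ord N) -cardsT (card_part _ hn hu).
apply: eq_bigr => t _; rewrite setTI.
rewrite (_ : arc j t = [set i : 'I_N | 0 <= cdiff i (tnth j t) < gap j t]).
  by rewrite card_range ?subn0 // gap_le.
by apply/setP => i; rewrite !inE.
Qed.

Lemma sum_exc N K n (j : n.-tuple 'I_N) : 1 < n -> uniq j ->
  M K n.+1 j = \sum_t (gap j t - K.+1).
Proof.
move=> hn hu; rewrite /M (card_part _ hn hu).
apply: eq_bigr => t _.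
rewrite (_ : missed K n.+1 j :&: arc j t = [set i : 'I_N | K.+1 <= cdiff i (tnth j t) < gap j t]).
  by rewrite card_range // gap_le.
apply/setP => i; rewrite !inE.
case hi: (cdiff i (tnth j t) < gap j t); rewrite ?andbF ?andbT //.
have hi' : i \in arc j t by rewrite inE.
apply/forallP/idP => [H | H s].
  by have := H t; rewrite ltnS ltn_ord.
apply/implyP => _; apply: leq_trans H _; exact: arc_own hn hu hi' s.
Qed.

Lemma det_inj N n (j j' : n.-tuple 'I_N) (t0 : 'I_n) : 1 < n -> uniq j -> uniq j' ->
  tnth j t0 = tnth j' t0 -> (forall t, succ j t = succ j' t) ->
  (forall t, gap j t = gap j' t) -> j = j'.
Proof.
move=> hn hu hu' h0 hs hg; apply: eq_from_tnth.
suff H : forall d s, cdiff (tnth j s) (tnth j t0) < d -> tnth j s = tnth j' s.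
  by move=> s; apply: (H N); apply: cdiff_lt.
elim=> [//|d IH] s hd.
case: (eqVneq s t0) => [->//|hst].
have hts : t0 != s by rewrite eq_sym.
case: (@arg_minnP _ t0 (fun q => q != s) (fun q => cdiff (tnth j s) (tnth j q)) hts) => p hp hmin.
have hju := hu; move/tuple_uniqP in hju.
have pos : forall a b, a != b -> 0 < cdiff (tnth j a) (tnth j b).
  move=> a b hab; rewrite lt0n cdiff0; apply: contra hab => /eqP /hju ->; by [].
have hps : s != p by rewrite eq_sym.
have hsp : succ j p = s.
  apply/eqP; apply/negPn/negP => hq.
  have [hqp hgp] := succ_spec j p hn.
  have h1 := hgp s hps.
  have h2 := hmin (succ j p) hq.
  have h3 := gap_pos p hn hu.
  have := cdiff_tri (tnth j (succ j p)) (tnth j s) (tnth j p).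
  have := cdiff_lt (tnth j s) (tnth j (succ j p)).
  move: h1 h3; rewrite /gap. lia.
have hlt : cdiff (tnth j p) (tnth j t0) < cdiff (tnth j s) (tnth j t0).
  have := pos s p hps.
  have := hmin t0 hts.
  have := cdiff_tri (tnth j p) (tnth j s) (tnth j t0).
  have := cdiff_lt (tnth j p) (tnth j t0). lia.
have IHp := IH p (leq_trans hlt hd).
apply: (@cdiff_inj1 _ (tnth j p)) => /=.
have e1 : gap j p = cdiff (tnth j s) (tnth j p) by rewrite /gap hsp.
have e2 : gap j' p = cdiff (tnth j' s) (tnth j' p) by rewrite /gap -hs hsp.
by rewrite -e1 IHp -e2 hg.
Qed.

Lemma term_le n (F : 'I_n -> nat) t : F t <= \sum_s F s.
Proof. by rewrite (bigD1 t) //= leq_addr. Qed.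

Lemma sum_ab n (F : 'I_n -> nat) a b : a != b ->
  \sum_s F s = F a + F b + \sum_(t | (t != a) && (t != b)) F t.
Proof.
move=> hab; rewrite (bigD1 a) //= (bigD1 b) /=; last by rewrite eq_sym.
by rewrite addnA.
Qed.

Definition Dn N K iota r' := r'.+2 * K.+1 - N + iota.
Definition pa N K r' (j : r'.+2.-tuple 'I_N) : 'I_r'.+2 := odflt ord0 [pick t | K.+1 < gap j t].
Definition pb N K r' (j : r'.+2.-tuple 'I_N) : 'I_r'.+2 := odflt ord0 [pick t | gap j t < K.+1].
Definition hcode N K iota r' (j : r'.+2.-tuple 'I_N) t : 'I_(2 * Dn N K iota r').+1 :=
  inord (gap j t + Dn N K iota r' - K.+1).
Definition code N K iota r' (j : r'.+2.-tuple 'I_N) : {ffun 'I_r' -> 'I_(2 * Dn N K iota r').+1} :=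
  [ffun k => hcode K iota j (lift (pa K j) (lift (odflt ord0 (unlift (pa K j) (pb K j))) k))].
Definition phi N K iota r' (j : r'.+2.-tuple 'I_N) :=
  (tnth j ord0, [ffun t => succ j t], pa K j, pb K j, code K iota j).


Lemma facts N K iota r' (j : r'.+2.-tuple 'I_N) :
  0 < N -> N <= r'.+2 * K.+1 -> 1 <= iota -> uniq j -> M K r'.+3 j = iota ->
  [/\ \sum_t gap j t = N, \sum_t (gap j t - K.+1) = iota,
      \sum_t (K.+1 - gap j t) = Dn N K iota r',
      K.+1 < gap j (pa K j) & gap j (pb K j) < K.+1].
Proof.
move=> hN hNr hi hu hM.
have hn : 1 < r'.+2 by [].
have s1 := sum_gap hn hu.
have s2 : \sum_t (gap j t - K.+1) = iota by rewrite -hM (sum_exc K hn hu).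
have s3 : \sum_t (K.+1 - gap j t) = Dn N K iota r'.
  have E : \sum_t (gap j t + (K.+1 - gap j t)) = \sum_t (K.+1 + (gap j t - K.+1)).
    apply: eq_bigr => t _; lia.
  move: E; rewrite !big_split /= s1 s2 sum_nat_const card_ord /Dn. lia.
split => //.
  rewrite /pa; case: pickP => [t //|H]; exfalso.
  move: s2; rewrite big1 => [|t _]; first lia.
  by have := H t; rewrite /= ltnNge => /negbFE; rewrite -subn_eq0 => /eqP.
rewrite /pb; case: pickP => [t //|H]; exfalso.
move: s3; rewrite big1 => [|t _]; first by rewrite /Dn; lia.
by have := H t; rewrite /= ltnNge => /negbFE; rewrite -subn_eq0 => /eqP.
Qed.

Lemma lift_other n (a b t : 'I_n.+2) : a != b -> t != a -> t != b ->
  exists k, t = lift a (lift (odflt ord0 (unlift a b)) k).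
Proof.
move=> hab hta htb.
have [b' eb ub] := unlift_some hab.
have hat : a != t by rewrite eq_sym.
have [u eu _] := unlift_some hat.
rewrite ub /=.
have hbu : b' != u by apply: contra htb => /eqP e; rewrite eu eb e.
have [k ek _] := unlift_some hbu.
by exists k; rewrite eu ek.
Qed.

Lemma phi_inj N K iota r' : 0 < N -> N <= r'.+2 * K.+1 -> 1 <= iota ->
  {in [set j : r'.+2.-tuple 'I_N | uniq j && (M K r'.+3 j == iota)] &, injective (@phi N K iota r')}.
Proof.
move=> hN hNr hi j j'; rewrite !inE => /andP[hu /eqP hM] /andP[hu' /eqP hM'].
rewrite /phi => -[h0 hsucc ha hb hc].
have [s1 s2 s3 hpa hpb] := facts hN hNr hi hu hM.
have [s1' s2' s3' hpa' hpb'] := facts hN hNr hi hu' hM'.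
rewrite -ha in hpa'; rewrite -hb in hpb'.
have hab : pa K j != pb K j by apply/eqP => e; move: hpa; rewrite e; lia.
have b1 : forall t, gap j t - K.+1 <= iota by move=> t; rewrite -s2; apply: term_le.
have b2 : forall t, K.+1 - gap j t <= Dn N K iota r' by move=> t; rewrite -s3; apply: term_le.
have b1' : forall t, gap j' t - K.+1 <= iota by move=> t; rewrite -s2'; apply: term_le.
have b2' : forall t, K.+1 - gap j' t <= Dn N K iota r' by move=> t; rewrite -s3'; apply: term_le.
have hother : forall t, t != pa K j -> t != pb K j -> gap j t = gap j' t.
  move=> t hta htb; have [k ek] := lift_other hab hta htb.
  move/ffunP: (hc) => /(_ k); rewrite !ffunE -ha -hb -ek /hcode.
  move/(congr1 (@nat_of_ord _)); rewrite !inordK.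
  - have := b1 t; have := b2 t; have := b1' t; have := b2' t; lia.
  - have := b1' t; have := b2' t; have : iota <= Dn N K iota r' by rewrite /Dn; lia. lia.
  - have := b1 t; have := b2 t; have : iota <= Dn N K iota r' by rewrite /Dn; lia. lia.
have hrest : forall F : nat -> nat,
    \sum_(t | (t != pa K j) && (t != pb K j)) F (gap j t) =
    \sum_(t | (t != pa K j) && (t != pb K j)) F (gap j' t).
  by move=> F; apply: eq_bigr => t /andP[h1 h2]; rewrite hother.
have ga : gap j (pa K j) = gap j' (pa K j).
  move: s2 s2'; rewrite (sum_ab _ hab) (sum_ab (fun t => gap j' t - K.+1) hab).
  rewrite (hrest (fun g => g - K.+1)).
  move: hpa hpb hpa' hpb'. lia.
have gb : gap j (pb K j) = gap j' (pb K j).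
  move: s1 s1'; rewrite (sum_ab _ hab) (sum_ab (fun t => gap j' t) hab).
  rewrite (hrest (fun g => g)). rewrite ga. lia.
apply: (det_inj (t0 := ord0)) => //.
  by move=> t; move/ffunP: hsucc => /(_ t); rewrite !ffunE.
move=> t; case: (eqVneq t (pa K j)) => [->//|hta].
case: (eqVneq t (pb K j)) => [->//|htb].
exact: hother.
Qed.

Local Open Scope ring_scope.

Theorem lemma5p1 (r : nat) (hr : (2 <= r)%N) :
  exists C : rat, forall (K N iota : nat),
    (1 <= K)%N -> (0 < N)%N -> (N <= r * (K + 1))%N -> (1 <= iota)%N ->
    let y : rat := r%:R - N%:R / (K + 1)%:R in
    (#|[set j : r.-tuple 'I_N | uniq j && (M K (r.+1) j == iota)]|)%:R
      <= C * N%:R * (y * K%:R + iota%:R) ^+ (r - 2).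
Proof.
case: r hr => [|[|r']] // _.
exists ((r'.+2 ^ (r'.+4) * 4 ^ r')%N%:R) => K N iota hK hN hNr hi.
cbv zeta; set y := (r'.+2%:R - N%:R / (K + 1)%:R).
rewrite addn1 in hNr.
have hcard : (#|[set j : r'.+2.-tuple 'I_N | uniq j && (M K r'.+3 j == iota)]|
   <= N * (r'.+2 ^ r'.+2 * (r'.+2 * r'.+2)) * (2 * Dn N K iota r').+1 ^ r')%N.
  rewrite -(card_in_imset (phi_inj hN hNr hi)); apply: leq_trans (max_card _) _.
  rewrite !card_prod !card_ffun !card_ord. lia.
rewrite (_ : (r'.+2 - 2)%N = r'); last lia.
apply: le_trans (_ : ((N * (r'.+2 ^ r'.+2 * (r'.+2 * r'.+2)) * (2 * Dn N K iota r').+1 ^ r')%N%:R <= _)).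
  by rewrite ler_nat.
set k : rat := K%:R; set n : rat := N%:R; set rr : rat := r'.+2%:R; set io : rat := iota%:R.
have hk : 1 <= k by rewrite /k ler1n.
have hio : 1 <= io by rewrite /io ler1n.
have hk1 : (K.+1)%:R = k + 1 by rewrite -addn1 natrD.
have hnr : n <= rr * (k + 1) by rewrite /n /rr -hk1 -natrM ler_nat.
set z := rr - n / (k + 1).
have hy : y = z by rewrite /y /z addn1 hk1.
have hz : 0 <= z.
  rewrite /z subr_ge0 ler_pdivrMr //; lra.
have hzk : rr * (k + 1) - n = z * (k + 1).
  rewrite /z mulrBl mulfVK //; apply/eqP => e; move: hk; lra.
have hm : ((2 * Dn N K iota r').+1)%:R <= 4 * (y * k + io).
  rewrite /Dn -addn1 natrD natrM natrD natrB // natrM -/rr -/n hk1 -/io hy hzk.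
  have hk0 : 0 <= k - 1 by rewrite subr_ge0.
  have := mulr_ge0 hz hk0. nra.
set mm : rat := ((2 * Dn N K iota r').+1)%:R.
have e1 : ((N * (r'.+2 ^ r'.+2 * (r'.+2 * r'.+2)) * (2 * Dn N K iota r').+1 ^ r')%N%:R : rat)
   = n * (rr ^+ r'.+2 * (rr * rr)) * mm ^+ r'.
  by rewrite natrM natrM natrM natrM (natrX _ r'.+2 r'.+2) natrX.
have e2 : ((r'.+2 ^ r'.+4 * 4 ^ r')%N%:R : rat) = rr ^+ r'.+4 * 4 ^+ r'.
  by rewrite natrM (natrX _ r'.+2 r'.+4) natrX.
rewrite e1 e2.
have hx : 0 <= 4 * (y * k + io).
  apply: le_trans hm; exact: ler0n.
have hpow := lerXn2r r' (ler0n _ ((2 * Dn N K iota r').+1)) hx hm.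
have -> : rr ^+ r'.+4 * 4 ^+ r' * n * (y * k + io) ^+ r' =
    (n * (rr ^+ r'.+2 * (rr * rr))) * (4 * (y * k + io)) ^+ r'.
  by rewrite exprMn !exprS; ring.
apply: ler_wpM2l => //.
apply: mulr_ge0; first exact: ler0n.
apply: mulr_ge0; first exact: exprn_ge0 (ler0n _ _).
exact: mulr_ge0 (ler0n _ _) (ler0n _ _).
Qed.
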